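(* For every integer $s\ge 3$ there exists $c>0$ such that for infinitely many positive integers $n$, there is a graph with $n$ vertices and with no stable set of size $s$ such that every clique cover of it has size at least $cn^{2-4/(s+1)}/(\log n)^2$.
   Context: All graphs are finite and simple. A clique $X$ of $G$ covers an edge $uv$ if $u,v\in X$; a clique cover of $G$ is a collection of cliques of $G$ that together cover all edges of $G$, and its size is the number of cliques in it. Logarithms are to base two. *)

(* Defs.v *)
From mathcomp Require Import all_boot.
From Stdlib Require Import Reals.

Set Implicit Arguments.
Unset Strict Implicit.
Unset Printing Implicit Defensive.

Definition simple_graph (T : finType) (e : rel T) : Prop :=
  symmetric e /\ irreflexive e.

Definition is_clique (T : finType) (e : rel T) (X : {set T}) : Prop :=
  forall u v, u \in X -> v \in X -> u != v -> e u v.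

Definition is_stable (T : finType) (e : rel T) (S : {set T}) : Prop :=
  forall u v, u \in S -> v \in S -> ~~ e u v.

Definition is_clique_cover (T : finType) (e : rel T) (C : {set {set T}}) : Prop :=
  (forall X, X \in C -> is_clique e X) /\
  (forall u v, e u v -> exists2 X, X \in C & (u \in X) && (v \in X)).

Definition log2 (x : R) : R := (ln x / ln 2)%R.

(* Main.v *)
Require Import Defs.
From mathcomp Require Import all_boot all_order all_algebra.
From mathcomp Require Import zify ring lra.
Set Implicit Arguments. Unset Strict Implicit. Unset Printing Implicit Defensive.
Import Order.TTheory GRing.Theory Num.Theory.

Section LLL.
Local Open Scope ring_scope.
Variables (R : realFieldType) (Omega : finType) (w : Omega -> R).
Hypothesis w_ge0 : forall o, 0 <= w o.
Definition Pr (A : {set Omega}) : R := \sum_(o in A) w o.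

Lemma Pr_ge0 (A : {set Omega}) : 0 <= Pr A.
Proof. by apply: sumr_ge0 => o _; apply: w_ge0. Qed.

Lemma Pr_mono (A B : {set Omega}) : A \subset B -> Pr A <= Pr B.
Proof.
move=> sAB; rewrite /Pr [X in _ <= X](big_setID A) /=.
have -> : B :&: A = A by apply/setIidPr.
by rewrite lerDl; apply: sumr_ge0 => o _; apply: w_ge0.
Qed.

Lemma Pr_split (A B : {set Omega}) : Pr A = Pr (A :&: B) + Pr (A :\: B).
Proof. by rewrite /Pr (big_setID B). Qed.

Variables (I : finType) (ev : I -> {set Omega}) (Gam : I -> {set I}) (x : I -> R).
Definition Cap (S : {set I}) : {set Omega} :=
  [set o | [forall j, (j \in S) ==> (o \notin ev j)]].

Lemma Cap_sub (S T : {set I}) : S \subset T -> Cap T \subset Cap S.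
Proof.
move=> sST; apply/subsetP => o; rewrite !inE => /forallP H.
apply/forallP => j; apply/implyP => jS; exact: (implyP (H j) (subsetP sST j jS)).
Qed.

Lemma CapU1 j (S : {set I}) : Cap (j |: S) = Cap S :\: ev j.
Proof.
apply/setP => o; rewrite !inE; apply/forallP/andP.
  move=> H; split; first by have := H j; rewrite !inE eqxx.
  apply/forallP => i; apply/implyP => iS; have := H i; rewrite !inE iS orbT; exact.
case=> oj /forallP H i; rewrite !inE; apply/implyP => /orP [/eqP -> //|iS].
exact: (implyP (H i)).
Qed.

Hypothesis x_ge0 : forall i, 0 <= x i.
Hypothesis x_le1 : forall i, x i <= 1.

Lemma peel (U S2 : {set I}) : [disjoint U & S2] ->
  (forall (V : {set I}) j, j \in U -> j \notin V -> V \subset U :|: S2 ->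
     Pr (ev j :&: Cap V) <= x j * Pr (Cap V)) ->
  (\prod_(j in U) (1 - x j)) * Pr (Cap S2) <= Pr (Cap (U :|: S2)).
Proof.
move: {2}#|U| (leqnn #|U|) => m; elim: m U => [|m IH] U.
  rewrite leqn0 cards_eq0 => /eqP -> _ _; by rewrite big_set0 mul1r set0U.
move=> hU dU Hc; have [->|[j jU]] := set_0Vmem U.
  by rewrite big_set0 mul1r set0U.
set U' := U :\ j.
have jU' : j \notin U' by rewrite !inE eqxx.
have hU' : (#|U'| <= m)%N by move: hU; rewrite (cardsD1 j U) jU add1n ltnS.
have dU' : [disjoint U' & S2].
  by apply: disjointWl dU; apply: subsetDl.
have eU : U :|: S2 = j |: (U' :|: S2).
  by rewrite setUA -(setD1K jU).
have jS2 : j \notin S2 by rewrite (disjointFr dU jU).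
have jV : j \notin U' :|: S2 by rewrite in_setU negb_or jU' jS2.
have IH' := IH U' hU' dU'.
have IH'' : \prod_(j0 in U') (1 - x j0) * Pr (Cap S2) <= Pr (Cap (U' :|: S2)).
  apply: IH' => V i iU' iV sV; apply: Hc => //.
    by move: iU'; rewrite !inE => /andP[].
  apply: subset_trans sV _; apply: setSU; apply: subsetDl.
rewrite eU CapU1 (bigD1 j jU) /=.
have -> : \prod_(i in U | i != j) (1 - x i) = \prod_(i in U') (1 - x i).
  by apply: eq_bigl => i; rewrite !inE andbC.
have hj := Hc (U' :|: S2) j jU jV.
have hsub : (U' :|: S2) \subset U :|: S2 by apply: setSU; apply: subsetDl.
have := hj hsub.
have := Pr_split (Cap (U' :|: S2)) (ev j).
rewrite setIC => ->.
move=> H1.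
have h1 : 0 <= 1 - x j by rewrite subr_ge0.
rewrite -mulrA.
apply: le_trans (ler_wpM2l h1 IH'') _.
rewrite mulrBl mul1r (Pr_split (Cap (U' :|: S2)) (ev j)) [Cap _ :&: ev j]setIC. move: H1. rewrite mulrDr. lra.
Qed.

Lemma prod_sub (A B : {set I}) (f : I -> R) : A \subset B ->
  (forall i, 0 <= f i <= 1) -> \prod_(i in B) f i <= \prod_(i in A) f i.
Proof.
move=> sAB hf; rewrite (big_setID A) /=.
have -> : B :&: A = A by apply/setIidPr.
have h0 : 0 <= \prod_(i in A) f i by apply: prodr_ge0 => i _; case/andP: (hf i).
rewrite -[X in _ <= X]mulr1; apply: ler_wpM2l => //.
by apply: prodr_ile1 => i _; apply: hf.
Qed.

Hypothesis indep : forall i (S : {set I}), [disjoint S & i |: Gam i] ->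
  Pr (ev i :&: Cap S) <= Pr (ev i) * Pr (Cap S).
Hypothesis Hx : forall i, Pr (ev i) <= x i * \prod_(j in Gam i) (1 - x j).

Lemma claim_step (S : {set I}) i : i \notin S ->
  (forall (V : {set I}) j, j \notin V -> V \subset S -> j \in S ->
      Pr (ev j :&: Cap V) <= x j * Pr (Cap V)) ->
  Pr (ev i :&: Cap S) <= x i * Pr (Cap S).
Proof.
move=> iS H.
set S1 := S :&: Gam i; set S2 := S :\: Gam i.
have eS : S = S1 :|: S2 by rewrite /S1 /S2 setID.
have d12 : [disjoint S1 & S2].
  by rewrite -setI_eq0; apply/eqP/setP => j; rewrite !inE; case: (j \in S); case: (j \in Gam i).
have dS2 : [disjoint S2 & i |: Gam i].
  rewrite -setI_eq0; apply/eqP/setP => j; rewrite !inE.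
  case: (j =P i) => [->|_]; first by rewrite (negbTE iS) andbF.
  by case: (boolP (j \in Gam i)) => h; rewrite ?h ?andbF ?andbT ?orbT //=; rewrite andbF.
have h1 : Pr (ev i :&: Cap S) <= Pr (ev i :&: Cap S2).
  by apply: Pr_mono; apply: setIS; apply: Cap_sub; apply: subsetDl.
apply: (le_trans h1); apply: (le_trans (indep dS2)).
have hf : forall j, 0 <= 1 - x j <= 1.
  by move=> j; apply/andP; split; [rewrite subr_ge0 | rewrite lerBlDr lerDl].
have hP2 := Pr_ge0 (Cap S2).
apply: le_trans (ler_wpM2r hP2 (Hx i)) _.
have hsub : \prod_(j in Gam i) (1 - x j) <= \prod_(j in S1) (1 - x j).
  by apply: prod_sub => //; apply: subsetIr.
apply: le_trans (_ : x i * \prod_(j in S1) (1 - x j) * Pr (Cap S2) <= _).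
  by apply: ler_wpM2r => //; apply: ler_wpM2l.
rewrite -mulrA; apply: ler_wpM2l => //.
rewrite eS; apply: peel => // V j jS1 jV sV; apply: H => //.
  by rewrite eS.
by move: jS1; rewrite /S1 inE => /andP[].
Qed.

Lemma claim m : forall (S : {set I}), (#|S| <= m)%N -> forall i, i \notin S ->
  Pr (ev i :&: Cap S) <= x i * Pr (Cap S).
Proof.
elim: m => [|m IH] S hS i iS; apply: claim_step => // V j jV sV jS.
  by move: hS; rewrite leqn0 cards_eq0 => /eqP E; rewrite E inE in jS.
apply: IH => //.
have : V \proper S by rewrite properEneq sV andbT; apply/eqP => E; rewrite E jS in jV.
move/proper_card => h; rewrite -ltnS; exact: leq_trans h hS.
Qed.

Theorem LLL : (\prod_(i in setT) (1 - x i)) * Pr setT <= Pr (Cap setT).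
Proof.
have E : Cap set0 = setT by apply/setP => o; rewrite !inE; apply/forallP => j; rewrite inE.
rewrite -{1}E -{2}(setU0 setT); apply: peel; first by rewrite -setI_eq0 setI0.
by move=> V j _ jV _; apply: (@claim #|V|).
Qed.
End LLL.


Section ProdS.
Local Open Scope ring_scope.
Variables (R : realFieldType) (T : finType) (p : R).
Hypothesis p_ge0 : 0 <= p.
Hypothesis p_le1 : p <= 1.
Definition cw (b : bool) : R := if b then p else 1 - p.
Definition wt (f : {ffun T -> bool}) : R := \prod_t cw (f t).

Lemma wt_ge0 f : 0 <= wt f.
Proof. apply: prodr_ge0 => t _; rewrite /cw; case: (f t) => //; by rewrite subr_ge0. Qed.

Lemma sum_wt : \sum_f wt f = 1.
Proof.
rewrite /wt -(bigA_distr_bigA (fun t b => cw b)) /=.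
apply: big1 => t _; by rewrite big_bool /cw /= addrC subrK.
Qed.

Lemma Pr_fix (D : {set T}) (b0 : bool) :
  Pr wt [set f : {ffun T -> bool} | [forall t in D, f t == b0]] = cw b0 ^+ #|D|.
Proof.
pose h t b := if t \in D then (if b == b0 then cw b else 0) else cw b.
rewrite /Pr big_mkcond /=.
transitivity (\sum_(f : {ffun T -> bool}) \prod_t h t (f t)).
  apply: eq_bigr => f _; rewrite inE.
  case: (boolP [forall t in D, f t == b0]) => [/forallP H|/forallP H].
    apply: eq_bigr => t _; rewrite /h; case: ifP => // tD.
    by have := H t; rewrite tD /= => ->.
  have [t Ht] : exists t, ~~ ((t \in D) ==> (f t == b0)).
    by apply/existsP; rewrite -negb_forall; apply/forallP.
  rewrite (bigD1 t) //= /h; move: Ht; rewrite negb_imply => /andP[-> /negbTE ->].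
  by rewrite mul0r.
rewrite -(bigA_distr_bigA h) /=.
rewrite (bigID (fun t => t \in D)) /=.
rewrite [X in _ * X]big1 ?mulr1; last first.
  by move=> t tD; rewrite big_bool /h (negbTE tD) /cw /= addrC subrK.
rewrite -prodr_const; apply: eq_bigr => t tD.
by rewrite big_bool /h tD; clear h; case: b0; rewrite /= ?addr0 ?add0r.
Qed.

Definition dep (D : {set T}) (A : {set {ffun T -> bool}}) :=
  forall f g : {ffun T -> bool}, (forall t, t \in D -> f t = g t) -> (f \in A) = (g \in A).

Definition mix (D : {set T}) (f g : {ffun T -> bool}) : {ffun T -> bool} :=
  [ffun t => if t \in D then f t else g t].

Lemma indep_prod (D : {set T}) (A C : {set {ffun T -> bool}}) : dep D A -> dep (~: D) C ->
  Pr wt (A :&: C) = Pr wt A * Pr wt C.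
Proof.
move=> dA dC.
pose F (fg : {ffun T -> bool} * {ffun T -> bool}) :=
  if (fg.1 \in A) && (fg.2 \in C) then wt fg.1 * wt fg.2 else 0.
have -> : Pr wt A * Pr wt C = \sum_fg F fg.
  have -> : \sum_fg F fg = \sum_f \sum_g F (f, g).
    by rewrite pair_bigA; apply: eq_bigr => -[f g].
  rewrite /Pr mulr_suml [LHS]big_mkcond /=.
  apply: eq_bigr => f _; case: ifP => fA.
    rewrite mulr_sumr big_mkcond /=; apply: eq_bigr => g _.
    by rewrite /F /= fA; case: ifP.
  by rewrite big1 // => g _; rewrite /F /= fA.
pose sw (fg : {ffun T -> bool} * {ffun T -> bool}) := (mix D fg.1 fg.2, mix D fg.2 fg.1).
have swK : involutive sw.
  case=> f g; rewrite /sw /=; congr pair; apply/ffunP => t; rewrite !ffunE;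
  by case: (t \in D).
rewrite (reindex_inj (inv_inj swK)) /=.
have -> : \sum_fg F (sw fg) = \sum_fg (if fg.1 \in A :&: C then wt fg.1 * wt fg.2 else 0).
  apply: eq_bigr => [[f g]] _; rewrite /F /sw /=.
  have -> : (mix D f g \in A) = (f \in A) by apply: dA => t tD; rewrite ffunE tD.
  have -> : (mix D g f \in C) = (f \in C).
    by apply: dC => t; rewrite inE ffunE => /negbTE ->.
  rewrite inE; case: ifP => // _.
  rewrite /wt -!big_split /=; apply: eq_bigr => t _; rewrite !ffunE.
  by case: (t \in D) => //; rewrite mulrC.
rewrite -(pair_bigA _ (fun f g => if f \in A :&: C then wt f * wt g else 0)) /=.
rewrite /Pr [LHS]big_mkcond /=; apply: eq_bigr => f _.
case: ifP => _; last by rewrite big1.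
by rewrite -mulr_sumr sum_wt mulr1.
Qed.
End ProdS.


Lemma count_cover (X Y : finType) (A : {set X}) (P : {set Y}) (r : X -> Y -> bool) m :
  (forall a, a \in A -> exists2 t, t \in P & r a t) ->
  (forall t, t \in P -> #|[set a in A | r a t]| <= m) -> #|A| <= #|P| * m.
Proof.
move=> H1 H2.
have -> : #|A| = \sum_(a in A) 1 by rewrite sum1_card.
apply: (@leq_trans (\sum_(a in A) \sum_(t in P) (r a t : nat))).
  apply: leq_sum => a aA; have [t tP rt] := H1 a aA.
  by rewrite (bigD1 t) //= rt.
rewrite exchange_big /= -sum_nat_const; apply: leq_sum => t tP.
apply: leq_trans (H2 t tP); rewrite -sum1_card big_mkcond /= [X in _ <= X]big_mkcond /=.
apply: leq_sum => a _; rewrite inE; by case: (a \in A); case: (r a t).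
Qed.

Definition pairs (n : nat) (S : {set 'I_n}) : {set {set 'I_n}} :=
  [set t : {set 'I_n} | (t \subset S) && (#|t| == 2)].

Lemma card_pairs n (S : {set 'I_n}) : #|pairs S| = 'C(#|S|, 2).
Proof. by rewrite -cards_draws; apply: eq_card => t; rewrite !inE. Qed.

Lemma card_super n (t : {set 'I_n}) m : #|t| = 2 ->
  #|[set j : {set 'I_n} | (#|j| == m) && (t \subset j)]| <= 'C(n - 2, m - 2).
Proof.
move=> ht.
set A := [set j : {set 'I_n} | _].
have inj : {in A &, injective (fun j => j :\: t)}.
  move=> j1 j2; rewrite !inE => /andP[_ s1] /andP[_ s2] E.
  by rewrite -(setID j1 t) -(setID j2 t) E (setIidPr s1) (setIidPr s2).
rewrite -(card_in_imset inj).
have -> : 'C(n - 2, m - 2) = #|[set B : {set 'I_n} | B \subset ~: t & #|B| == m - 2]|.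
  by rewrite cards_draws cardsCs setCK ht card_ord.
apply: subset_leq_card; apply/subsetP => B /imsetP [j jA ->]; move: jA; rewrite /A inE => /andP[/eqP hj sj].
rewrite inE; apply/andP; split.
  by apply/subsetP => u; rewrite !inE => /andP[].
by rewrite cardsD (setIidPr sj) hj ht.
Qed.

Lemma sub_of_card (T : finType) (X : {set T}) k : k <= #|X| ->
  exists2 S : {set T}, S \subset X & #|S| = k.
Proof.
move=> hk; exists [set x in take k (enum X)].
  apply/subsetP => x; rewrite inE => /mem_take; by rewrite mem_enum.
have u : uniq (take k (enum X)) by apply: take_uniq; apply: enum_uniq.
rewrite cardsE (card_uniqP u) size_takel //. by rewrite -cardE.
Qed.




Lemma bin_ident n s : 2 <= s -> s <= n ->
  'C(n, s) * (s * (s - 1)) = n * (n - 1) * 'C(n - 2, s - 2).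
Proof.
move=> h2 hs.
have h1 := mul_bin_diag n (s - 1).
have h2' := mul_bin_diag (n - 1) (s - 2).
have e1 : (s - 1).+1 = s by lia.
have e2 : (s - 2).+1 = s - 1 by lia.
rewrite e1 in h1; rewrite e2 in h2'.
have e3 : (n.-1) = n - 1 by lia.
have e4 : (n - 1).-1 = n - 2 by lia.
rewrite e3 in h1; rewrite e4 in h2'.
have A : s * 'C(n, s) = n * 'C(n - 1, s - 1) by rewrite -h1 mulnC.
have B : (s - 1) * 'C(n - 1, s - 1) = (n - 1) * 'C(n - 2, s - 2) by rewrite -h2' mulnC.
rewrite mulnA [_ * s]mulnC A -mulnA [_ * (s - 1)]mulnC B mulnA //.
Qed.

Section GraphOf.
Variables (n s k : nat) (f : {ffun {set 'I_n} -> bool}).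
Hypothesis H1 : forall S : {set 'I_n}, #|S| = s -> exists2 t, t \in pairs S & ~~ f t.
Hypothesis H2 : forall S : {set 'I_n}, #|S| = k -> exists2 t, t \in pairs S & f t.

Definition ge (u v : 'I_n) : bool := (u != v) && ~~ f [set u; v].

Lemma pairs_mem (S t : {set 'I_n}) : t \in pairs S ->
  exists u v, [/\ u != v, t = [set u; v], u \in S & v \in S].
Proof.
rewrite inE => /andP[sS /cards2P [u [v [uv E]]]].
exists u, v; split => //; apply: (subsetP sS); by rewrite E !inE eqxx ?orbT.
Qed.

Lemma ge_simple : simple_graph ge.
Proof.
split.
  move=> u v; rewrite /ge eq_sym; congr (_ && ~~ f _); apply/setP => w; rewrite !inE orbC //.
by move=> u; rewrite /ge eqxx.
Qed.

Lemma ge_nostable (S : {set 'I_n}) : #|S| = s -> ~ is_stable ge S.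
Proof.
move=> hS hst; have [t tP ft] := H1 hS.
have [u [v [uv E uS vS]]] := pairs_mem tP.
have := hst u v uS vS; by rewrite /ge uv -E ft.
Qed.

Lemma clique_small (X : {set 'I_n}) : is_clique ge X -> #|X| < k.
Proof.
move=> hX; rewrite ltnNge; apply/negP => hk.
have [T sTX hT] := sub_of_card hk.
have [t tP ft] := H2 hT.
have [u [v [uv E uS vS]]] := pairs_mem tP.
have := hX u v (subsetP sTX u uS) (subsetP sTX v vS) uv.
by rewrite /ge uv -E ft.
Qed.

Definition Eset := [set t : {set 'I_n} | (#|t| == 2) && ~~ f t].

Lemma Eset_lower : 2 <= s -> s <= n -> n * (n - 1) <= #|Eset| * (s * (s - 1)).
Proof.
move=> h2 hn.
have hc : 'C(n, s) <= #|Eset| * 'C(n - 2, s - 2).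
  rewrite -[X in 'C(X, _)](card_ord n) -card_draws.
  apply: (@count_cover _ _ [set A : {set 'I_n} | #|A| == s] Eset (fun S t => t \subset S) 'C(n - 2, s - 2)).  
    move=> S; rewrite inE => /eqP hS; have [t tP ft] := H1 hS.
    exists t; move: tP; rewrite ?inE => /andP[sS ht] //; by rewrite ht ft.
  move=> t; rewrite inE => /andP[/eqP ht _].
  apply: leq_trans (card_super (s) ht); apply: subset_leq_card; apply/subsetP => S.
  by rewrite !inE.
have pos : 0 < 'C(n - 2, s - 2) by rewrite bin_gt0; lia.
have := bin_ident h2 hn.
move: hc pos; set a := 'C(n, s); set b := 'C(n - 2, s - 2); set E := #|Eset|.
move=> hc pos id.
have : n * (n - 1) * b <= E * (s * (s - 1)) * b.
  rewrite -id mulnAC; apply: leq_mul => //.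
by rewrite leq_pmul2r.
Qed.

Lemma cover_lower (C : {set {set 'I_n}}) : is_clique_cover ge C -> 2 <= s -> s <= n ->
  n * (n - 1) <= #|C| * 'C(k.-1, 2) * (s * (s - 1)).
Proof.
move=> [hcl hcov] h2 hn.
apply: leq_trans (Eset_lower h2 hn) _; rewrite leq_mul2r; apply/orP; right.
apply: (@count_cover _ _ Eset C (fun t X => t \subset X) 'C(k.-1, 2)).
  move=> t; rewrite inE => /andP[/cards2P [u [v [uv E]]] ft].
  have euv : ge u v by rewrite /ge uv -E ft.
  have [X XC /andP[uX vX]] := hcov u v euv.
  exists X => //; rewrite E; apply/subsetP => w; rewrite !inE => /orP[]/eqP ->//.
move=> X XC.
apply: leq_trans (_ : #|pairs X| <= _).
  apply: subset_leq_card; apply/subsetP => t; rewrite !inE => /andP[/andP[-> _] ->] //.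
rewrite card_pairs; apply: leq_bin2l.
have := clique_small (hcl X XC); lia.
Qed.
End GraphOf.


Section Prob.
Local Open Scope ring_scope.
Variables (R : realFieldType) (n s k : nat) (p xa yb : R).
Hypothesis sk : s != k.
Hypotheses (p_ge0 : 0 <= p) (p_le1 : p <= 1).
Hypotheses (xa_ge0 : 0 <= xa) (xa_lt1 : xa < 1) (yb_ge0 : 0 <= yb) (yb_lt1 : yb < 1).
Hypothesis NA : p ^+ 'C(s, 2) <=
  xa * (1 - xa) ^+ ('C(s, 2) * 'C(n - 2, s - 2)) * (1 - yb) ^+ 'C(n, k).
Hypothesis NB : (1 - p) ^+ 'C(k, 2) <=
  yb * (1 - xa) ^+ ('C(k, 2) * 'C(n - 2, s - 2)) * (1 - yb) ^+ 'C(n, k).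

Local Notation Om := {ffun {set 'I_n} -> bool}.

Definition ev (S : {set 'I_n}) : {set Om} :=
  if #|S| == s then [set f : Om | [forall t in pairs S, f t == true]]
  else if #|S| == k then [set f : Om | [forall t in pairs S, f t == false]]
  else set0.
Definition Gam (S : {set 'I_n}) : {set {set 'I_n}} :=
  [set S' | (S' != S) && (1 < #|S :&: S'|)%N].
Definition xv (S : {set 'I_n}) : R :=
  if #|S| == s then xa else if #|S| == k then yb else 0.

Lemma dep_ev S : dep (pairs S) (ev S).
Proof.
move=> f g H; rewrite /ev; case: ifP => _; [|case: ifP => _]; rewrite !inE //;
  by apply: eq_forallb_in => t tS; rewrite H.
Qed.

Lemma dep_Cap i (V : {set {set 'I_n}}) : [disjoint V & i |: Gam i] ->
  dep (~: pairs i) (Cap ev V).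
Proof.
move=> dV f g H; rewrite !inE; apply: eq_forallb => j.
case jV: (j \in V) => //=; congr negb; apply: dep_ev => t tj; apply: H.
rewrite inE; apply/negP => ti.
have : j \in i |: Gam i.
  rewrite !inE; case: (j =P i) => //= _.
  move: ti tj; rewrite !inE => /andP[si /eqP ht] /andP[sj _].
  have : t \subset i :&: j by rewrite subsetI si sj.
  move/subset_leq_card; rewrite ht; done.
by rewrite (disjointFr dV jV).
Qed.

Lemma bern (z : R) m : 0 <= z <= 1 -> 1 - z *+ m <= (1 - z) ^+ m.
Proof.
case/andP=> z0 z1; elim: m => [|m IH]; first by rewrite expr0 mulr0n subr0.
rewrite exprS mulrSr.
have h1 : 0 <= 1 - z by rewrite subr_ge0.
apply: le_trans (_ : (1 - z) * (1 - z *+ m) <= _); last by apply: ler_wpM2l.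
rewrite mulrBr mulr1 mulrBl mul1r opprB addrA.
have : 0 <= z * (z *+ m) by apply: mulr_ge0 => //; apply: mulrn_wge0.
lra.
Qed.


Lemma cnt_s (S : {set 'I_n}) :
  (#|[set j in Gam S | #|j| == s]| <= 'C(#|S|, 2) * 'C(n - 2, s - 2))%N.
Proof.
rewrite -card_pairs.
apply: (@count_cover _ _ [set j in Gam S | #|j| == s] (pairs S) (fun j t => t \subset j)).
  move=> j; rewrite !inE => /andP[/andP[_ hj] _].
  have [t st ht] := sub_of_card hj.
  exists t; last by apply: subset_trans st _; apply: subsetIr.
  rewrite inE ht eqxx andbT; apply: subset_trans st _; apply: subsetIl.
move=> t; rewrite inE => /andP[_ /eqP ht].
apply: leq_trans (card_super s ht); apply: subset_leq_card; apply/subsetP => j.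
by rewrite !inE => /andP[/andP[_ ->] ->].
Qed.

Lemma cnt_k (S : {set 'I_n}) :
  (#|[set j in Gam S | #|j| == k]| <= 'C(n, k))%N.
Proof.
rewrite -[X in 'C(X, _)](card_ord n) -card_draws; apply: subset_leq_card; apply/subsetP => j.
by rewrite !inE => /andP[_ ->].
Qed.

Lemma prod_bound (S : {set 'I_n}) :
  (1 - xa) ^+ ('C(#|S|, 2) * 'C(n - 2, s - 2)) * (1 - yb) ^+ 'C(n, k)
  <= \prod_(j in Gam S) (1 - xv j).
Proof.
have ha : 0 <= 1 - xa <= 1 by rewrite subr_ge0 ltW //= lerBlDr lerDl.
have hb : 0 <= 1 - yb <= 1 by rewrite subr_ge0 ltW //= lerBlDr lerDl.
rewrite (bigID (fun j : {set 'I_n} => #|j| == s)) /=.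
have -> : \prod_(j in Gam S | #|j| == s) (1 - xv j) = (1 - xa) ^+ #|[set j in Gam S | #|j| == s]|.
  rewrite -prodr_const; apply: eq_big => [j|j /andP[_ /eqP hj]]; first by rewrite !inE.
  by rewrite /xv hj eqxx.
rewrite (bigID (fun j : {set 'I_n} => #|j| == k)) /=.
have -> : \prod_(j | (j \in Gam S) && (#|j| != s) && (#|j| == k)) (1 - xv j) =
    (1 - yb) ^+ #|[set j in Gam S | #|j| == k]|.
  rewrite -prodr_const; apply: eq_big => [j|j /andP[/andP[_ hj] /eqP hk]].
    rewrite !inE; case: (#|j| =P k) => [->|_]; rewrite ?andbF //.
    by rewrite [k == s]eq_sym sk ?eqxx ?andbT.
  by rewrite /xv (negbTE hj) hk eqxx.
rewrite [X in _ * (_ * X)]big1 ?mulr1; last first.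
  by move=> j /andP[/andP[_ hj] hk]; rewrite /xv (negbTE hj) (negbTE hk) subr0.
case/andP: ha => ha0 ha1; case/andP: hb => hb0 hb1.
apply: ler_pM; rewrite ?exprn_ge0 //.
  by apply: ler_wiXn2l => //; apply: cnt_s.
by apply: ler_wiXn2l => //; apply: cnt_k.
Qed.

Lemma Hx_ok (i : {set 'I_n}) : Pr (wt p) (ev i) <= xv i * \prod_(j in Gam i) (1 - xv j).
Proof.
have hxa : 0 <= xa by [].
have PB := prod_bound i.
rewrite /ev; case: ifP => [/eqP hs|hs].
  rewrite (_ : xv i = xa); last by rewrite /xv hs eqxx.
  rewrite Pr_fix card_pairs hs /cw; apply: le_trans NA _.
  rewrite hs in PB; rewrite -mulrA; apply: ler_wpM2l => //.
case: ifP => [/eqP hk|hk].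
  rewrite (_ : xv i = yb); last by rewrite /xv hs hk eqxx.
  rewrite Pr_fix card_pairs hk /cw; apply: le_trans NB _.
  rewrite hk in PB; rewrite -mulrA; apply: ler_wpM2l => //.
rewrite (_ : xv i = 0); last by rewrite /xv hs hk.
by rewrite /Pr big_set0 mul0r.
Qed.

Theorem exists_good : exists f : Om,
  (forall S : {set 'I_n}, #|S| = s -> exists2 t, t \in pairs S & ~~ f t) /\
  (forall S : {set 'I_n}, #|S| = k -> exists2 t, t \in pairs S & f t).
Proof.
have hx0 : forall i, 0 <= xv i.
  by move=> i; rewrite /xv; case: ifP => _; [exact: xa_ge0|case: ifP => _ //; exact: yb_ge0].
have hx1 : forall i, xv i <= 1.
  by move=> i; rewrite /xv; case: ifP => _; [apply: ltW|case: ifP => _ //; apply: ltW].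
have hx1' : forall i, 0 < 1 - xv i.
  by move=> i; rewrite subr_gt0 /xv; case: ifP => _; [exact: xa_lt1|case: ifP => _ //; exact: yb_lt1].
have H := @LLL R Om (wt p) (wt_ge0 p_ge0 p_le1) {set 'I_n} ev Gam xv hx0 hx1.
have Hind : forall i (V : {set {set 'I_n}}), [disjoint V & i |: Gam i] ->
    Pr (wt p) (ev i :&: Cap ev V) <= Pr (wt p) (ev i) * Pr (wt p) (Cap ev V).
  by move=> i V dV; rewrite (indep_prod p (@dep_ev i) (dep_Cap dV)).
have := H Hind Hx_ok.
have hPT : Pr (wt p) [set: Om] = 1.
  rewrite /Pr -(sum_wt {set 'I_n} p); apply: eq_bigl => f; by rewrite inE.
rewrite hPT mulr1.
have pos : 0 < \prod_(i in [set: {set 'I_n}]) (1 - xv i) by apply: prodr_gt0 => i _.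
case: (set_0Vmem (Cap ev [set: {set 'I_n}])) => [E|[f fC]].
  rewrite E /Pr big_set0 => h; have := lt_le_trans pos h; by rewrite ltxx.
move=> _; exists f; move: fC; rewrite inE => /forallP hf; split.
  move=> S hS; have := hf S; rewrite in_setT /= /ev hS eqxx inE negb_forall.
  case/existsP => t; rewrite negb_imply => /andP[tP ft]; exists t => //.
  by move: ft; case: (f t).
move=> S hS; have := hf S; rewrite in_setT /= /ev hS eqxx.
have -> : (k == s) = false by apply/negbTE; rewrite eq_sym.
rewrite inE negb_forall.
case/existsP => t; rewrite negb_imply => /andP[tP ft]; exists t => //.
by move: ft; case: (f t).
Qed.
End Prob.


Lemma expn_mono m n e : m <= n -> m ^ e <= n ^ e.
Proof. by case: e => [|e] h; rewrite ?expn0 // leq_exp2r. Qed.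

Lemma ffact_le n m : n ^_ m <= n ^ m.
Proof.
elim: m n => [|m IH] n; first by rewrite ffactn0 expn0.
rewrite ffactnS expnS leq_mul2l; apply/orP; right.
apply: leq_trans (IH n.-1) _; apply: expn_mono; lia.
Qed.

Lemma bin_le n m : 'C(n, m) <= n ^ m.
Proof.
apply: leq_trans (ffact_le n m); rewrite -bin_ffact -{1}[ 'C(n, m)]muln1 leq_mul2l.
by rewrite fact_gt0 orbT.
Qed.

Lemma bin2_2 m : 'C(m, 2) * 2 = m * (m - 1).
Proof.
have := mul_bin_left m 1; rewrite bin1 => h; rewrite mulnC h; lia.
Qed.

Section NatFacts.
Variables s L : nat.
Hypotheses (hs : 3 <= s) (hL : s <= L).
Definition aa := (s + 1) * L.
Definition nn := 2 ^ aa.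
Definition qq := 2 ^ (2 * L + 2).
Definition kk := 4 * qq * (aa + 1) + 1.

Lemma q16 : 16 <= qq.
Proof. rewrite /qq (_ : 16 = 2 ^ 4) //; apply: leq_pexp2l => //; lia. Qed.

Lemma F1 : 8 * 'C(nn - 2, s - 2) <= qq ^ ('C(s, 2) - 1).
Proof.
have h2 := bin2_2 s.
apply: (@leq_trans (2 ^ 3 * 2 ^ (aa * (s - 2)))).
  rewrite leq_mul2l /=; apply: leq_trans (bin_le _ _) _.
  rewrite expnM; apply: expn_mono; rewrite /nn; lia.
rewrite -expnD /qq -expnM; apply: leq_pexp2l => //.
rewrite /aa; nia.
Qed.

Lemma F2 : 'C(s, 2) <= qq.
Proof.
have h2 := bin2_2 s.
have : s < 2 ^ s by apply: ltn_expl.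
have : 2 ^ s * 2 ^ s <= qq.
  by rewrite -expnD /qq; apply: leq_pexp2l => //; lia.
nia.
Qed.

Lemma F3 : maxn 'C(nn, kk) 1 <= 2 ^ (aa * kk).
Proof.
rewrite geq_max expn_gt0 /= andbT expnM; exact: bin_le.
Qed.

Lemma F4 : 2 * qq * (aa * kk + 2) <= 'C(kk, 2).
Proof.
have h2 := bin2_2 kk.
have := q16; rewrite /kk in h2 *; nia.
Qed.

Lemma F5 : s < kk.
Proof. have := q16; rewrite /kk /aa; nia. Qed.
End NatFacts.


Section NumS.
Local Open Scope ring_scope.
Variable R : realFieldType.

Lemma bernP (z : R) m : 0 <= z -> 1 + z *+ m <= (1 + z) ^+ m.
Proof.
move=> z0; elim: m => [|m IH]; first by rewrite expr0 mulr0n addr0.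
rewrite exprS mulrSr.
have h1 : 0 <= 1 + z by rewrite addr_ge0.
apply: le_trans (_ : (1 + z) * (1 + z *+ m) <= _); last by apply: ler_wpM2l.
rewrite mulrDl mul1r mulrDr mulr1 addrA.
have : 0 <= z * (z *+ m) by apply: mulr_ge0 => //; apply: mulrn_wge0.
lra.
Qed.

Lemma powle (x y : R) n : 0 <= x -> x <= y -> x ^+ n <= y ^+ n.
Proof.
move=> x0 xy; apply: lerXn2r => //; rewrite nnegrE //; exact: le_trans xy.
Qed.

Lemma oneminus (w : R) m : 0 <= w <= 1 -> (1 - w) ^+ m * (1 + w *+ m) <= 1.
Proof.
case/andP=> w0 w1.
have h0 : 0 <= (1 - w) ^+ m by apply: exprn_ge0; rewrite subr_ge0.
apply: le_trans (_ : (1 - w) ^+ m * (1 + w) ^+ m <= _).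
  by apply: ler_wpM2l => //; apply: bernP.
rewrite -exprMn; apply: exprn_ile1.
  by apply: mulr_ge0; [rewrite subr_ge0|rewrite addr_ge0].
have : 0 <= w * w by apply: mulr_ge0.
move=> h; rewrite mulrDr mulr1 mulrBl mul1r; lra.
Qed.

Variables s L : nat.
Hypotheses (hs : (3 <= s)%N) (hL : (s <= L)%N).
Let n := nn s L.
Let k := kk s L.
Let q := qq L.
Let Cs := 'C(s, 2).
Let Ck := 'C(k, 2).
Let N2 := 'C(n - 2, s - 2).
Let M := 'C(n, k).
Let M' := maxn M 1.
Definition pp : R := (q%:R)^-1.
Definition xaa : R := 4 * pp ^+ Cs.
Definition ybb : R := ((2 * M')%:R)^-1.

Let qpos : 0 < q%:R :> R.
Proof. rewrite ltr0n; have := q16 hs hL; lia. Qed.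

Lemma pp_gt0 : 0 < pp. Proof. by rewrite /pp invr_gt0. Qed.
Lemma pp_le : pp <= 1 / 16.
Proof.
rewrite /pp div1r lef_pV2 ?posrE ?ltr0n // ?ler_nat; first exact: (q16 hs hL).
by have := q16 hs hL; lia.
Qed.

Lemma Cs_ge1 : (1 <= Cs)%N.
Proof. have := bin2_2 s; rewrite /Cs; nia. Qed.

Lemma ppCs_le : pp ^+ Cs <= pp.
Proof.
have h := pp_gt0; have h2 := pp_le.
rewrite -[X in _ <= X]expr1; apply: ler_wiXn2l; [exact: ltW| lra | exact: Cs_ge1].
Qed.

Lemma xaa_ge0 : 0 <= xaa.
Proof. by rewrite /xaa mulr_ge0 // exprn_ge0 // ltW // pp_gt0. Qed.

Lemma xaa_le : xaa <= 4 * pp.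
Proof. rewrite /xaa; apply: ler_wpM2l => //; exact: ppCs_le. Qed.

Lemma N2xa : N2%:R * xaa <= pp / 2.
Proof.
have F := F1 hs hL; rewrite -/n -/q -/N2 -/Cs in F.
have hp := pp_gt0.
have e : Cs = (Cs - 1).+1 by have := Cs_ge1; lia.
have hQ : 0 < q%:R ^+ (Cs - 1) :> R by apply: exprn_gt0.
have hF : 8 * N2%:R <= q%:R ^+ (Cs - 1) :> R.
  by rewrite -(ler_nat R) natrM natrX in F.
have hpq : pp ^+ (Cs - 1) = (q%:R ^+ (Cs - 1))^-1 by rewrite /pp exprVn.
have h1 : N2%:R * pp ^+ (Cs - 1) <= 1 / 8 :> R.
  rewrite hpq ler_pdivrMr //; lra.
have -> : xaa = 4 * pp * pp ^+ (Cs - 1) by rewrite /xaa {1}e exprS mulrA.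
have : 0 <= 4 * pp by apply: mulr_ge0 => //; apply: ltW.
move=> h4.
rewrite [X in X <= _](_ : _ = (4 * pp) * (N2%:R * pp ^+ (Cs - 1))); last by ring. apply: le_trans (ler_wpM2l h4 h1) _; lra.
Qed.

Lemma Csxa : Cs%:R * (N2%:R * xaa) <= 1 / 2.
Proof.
have h := N2xa; have hp := pp_gt0.
have hC : Cs%:R * pp <= 1.
  rewrite /pp -[X in _ * X]div1r mulrA mulr1 ler_pdivrMr // mul1r ler_nat; exact: F2.
have hC0 : 0 <= Cs%:R :> R by [].
apply: le_trans (ler_wpM2l hC0 h) _. lra.
Qed.

Lemma xaa_lt1 : xaa < 1.
Proof. have := xaa_le; have := pp_le; have := pp_gt0; lra. Qed.

Lemma M'pos : (0 < M')%N. Proof. rewrite /M'; lia. Qed.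

Lemma ybb_gt0 : 0 < ybb.
Proof. rewrite /ybb invr_gt0 ltr0n; have := M'pos; lia. Qed.

Lemma MYb : M%:R * ybb <= 1 / 2.
Proof.
have hM : M%:R <= M'%:R :> R by rewrite ler_nat /M' leq_maxl.
have hM' : 0 < M'%:R :> R by rewrite ltr0n M'pos.
rewrite /ybb natrM ler_pdivrMr; last by apply: mulr_gt0.
lra.
Qed.

Lemma ybb_le : ybb <= 1 / 2.
Proof.
have hM' : 1 <= M'%:R :> R by rewrite ler1n M'pos.
rewrite /ybb natrM div1r lef_pV2 ?posrE; lra.
Qed.

Lemma hB : 1 / 2 <= (1 - ybb) ^+ M.
Proof.
have h1 := MYb; have h2 := ybb_le; have h3 := ybb_gt0.
apply: le_trans (bern _ _) ; last by apply/andP; split; lra.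
rewrite -[ybb *+ _]mulr_natl; lra.
Qed.

Lemma hA : 1 / 2 <= (1 - xaa) ^+ (Cs * N2).
Proof.
have h1 := Csxa; have h2 := xaa_lt1; have h3 := xaa_ge0.
apply: le_trans (bern _ _) ; last by apply/andP; split; lra.
rewrite -[xaa *+ _]mulr_natl natrM -mulrA; lra.
Qed.

Lemma NAok : pp ^+ Cs <= xaa * (1 - xaa) ^+ (Cs * N2) * (1 - ybb) ^+ M.
Proof.
have h1 := hA; have h2 := hB.
set A := (1 - xaa) ^+ _ in h1 *; set B := (1 - ybb) ^+ _ in h2 *.
have hP : 0 <= pp ^+ Cs by apply: exprn_ge0; apply: ltW; apply: pp_gt0.
rewrite /xaa; set P := pp ^+ Cs in hP *.
have hAB : 1 / 4 <= A * B.
  apply: le_trans (_ : 1 / 2 * (1 / 2) <= _); first lra.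
  apply: ler_pM => //; lra.
rewrite -mulrA -mulrA; apply: le_trans (_ : P * (4 * (1 / 4)) <= _); first lra.
rewrite [X in _ <= X]mulrCA; apply: ler_wpM2l => //.
by apply: ler_wpM2l.
Qed.

Lemma z2q : (1 - pp / 2) ^+ (2 * q) <= 1 / 2.
Proof.
have hp := pp_gt0; have hp2 := pp_le.
have := @oneminus (pp / 2) (2 * q).
have -> : pp / 2 *+ (2 * q) = 1.
  rewrite -mulr_natl natrM /pp. field. by rewrite pnatr_eq0; have := q16 hs hL; lia.
move=> h; have := h ltac:(apply/andP; split; lra); lra.
Qed.

Lemma NBok : (1 - pp) ^+ Ck <= ybb * (1 - xaa) ^+ (Ck * N2) * (1 - ybb) ^+ M.
Proof.
have hp := pp_gt0; have hp2 := pp_le.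
set z := 1 - pp / 2.
have z0 : 0 <= z by rewrite /z; lra.
have z1 : z <= 1 by rewrite /z; lra.
set Z := z ^+ Ck.
have Z0 : 0 <= Z by apply: exprn_ge0.
have hX : Z <= (1 - xaa) ^+ (Ck * N2).
  rewrite mulnC exprM; apply: powle => //.
  apply: le_trans (bern _ _); last by have := xaa_lt1; have := xaa_ge0; move=> *; apply/andP; split; lra.
  have := N2xa; rewrite -[xaa *+ _]mulr_natl /z; lra.
have hL2 : (1 - pp) ^+ Ck <= Z * Z.
  apply: le_trans (_ : (z ^+ 2) ^+ Ck <= _).
    apply: powle; first lra.
    rewrite /z expr2; have : 0 <= pp * pp by apply: mulr_ge0; lra.
    move=> h; rewrite mulrBl !mulrBr !mul1r mulr1; lra.
  by rewrite exprAC expr2.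
have hZ : Z <= ybb / 2.
  apply: le_trans (_ : z ^+ (2 * q * (aa s L * k + 2)) <= _).
    by apply: ler_wiXn2l => //; exact: (F4 hs hL).
  rewrite exprM.
  apply: le_trans (_ : (1 / 2) ^+ (aa s L * k + 2) <= _).
    apply: powle; [exact: exprn_ge0|exact: z2q].
  rewrite expr_div_n expr1n /ybb.
  have F := F3 s L; rewrite -/M -/M' -/k in F.
  have hM' : 1 <= M'%:R :> R by rewrite ler1n M'pos.
  have hF : M'%:R <= 2 ^+ (aa s L * k) :> R.
    by rewrite -(ler_nat R) natrX in F.
  have h2 : 0 < 2 ^+ (aa s L * k) :> R by apply: exprn_gt0.
  have h3 : 0 < (2 * M')%:R :> R by rewrite natrM; apply: mulr_gt0; lra.
  rewrite div1r -invfM lef_pV2 ?posrE; last 2 first.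
  - by apply: exprn_gt0.
  - by apply: mulr_gt0.
  rewrite exprD expr2 natrM; lra.
have hB' := hB.
set X := (1 - xaa) ^+ _ in hX *; set B := (1 - ybb) ^+ _ in hB' *.
have yb0 : 0 <= ybb by apply: ltW; apply: ybb_gt0.
apply: (le_trans hL2).
apply: le_trans (_ : Z * (ybb / 2) <= _); first by apply: ler_wpM2l.
apply: le_trans (_ : ybb * X * (1 / 2) <= _).
  have : Z * ybb <= X * ybb by apply: ler_wpM2r.
  lra.
by apply: ler_wpM2l => //; apply: mulr_ge0 => //; apply: le_trans hX.
Qed.

Lemma pp_le1 : pp <= 1.
Proof. have := pp_le; lra. Qed.
Lemma ybb_lt1 : ybb < 1.
Proof. have := ybb_le; lra. Qed.
End NumS.


Theorem graph_exists s L : 3 <= s -> s <= L ->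
  exists e : rel 'I_(nn s L), simple_graph e /\
    (forall S : {set 'I_(nn s L)}, #|S| = s -> ~ is_stable e S) /\
    (forall C : {set {set 'I_(nn s L)}}, is_clique_cover e C ->
       nn s L * (nn s L - 1) <= #|C| * 'C((kk s L).-1, 2) * (s * (s - 1))).
Proof.
move=> hs hL.
have sk : s != kk s L by rewrite neq_ltn (F5 hs hL).
have hp := pp_gt0 rat hs hL.
have hp2 := pp_le1 rat hs hL.
have hy2 := ybb_lt1 rat hs hL.
have [f [H1 H2]] := @exists_good rat (nn s L) s (kk s L) (pp rat L) (xaa rat s L) (ybb rat s L)
  sk (ltW hp) hp2 (xaa_ge0 rat hs hL) (xaa_lt1 rat hs hL) (ltW (ybb_gt0 rat hs hL))
  hy2 (NAok rat hs hL) (NBok rat hs hL).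
exists (ge f); split; first exact: ge_simple.
split; first by move=> S hS; apply: (ge_nostable H1).
move=> C hC; apply: (cover_lower H1 H2 hC); first lia.
have : s < 2 ^ s by apply: ltn_expl.
have : 2 ^ s <= nn s L by rewrite /nn /aa; apply: leq_pexp2l => //; nia.
lia.
Qed.

Lemma final_nat s L Cc : 3 <= s -> s <= L ->
  nn s L * (nn s L - 1) <= Cc * 'C((kk s L).-1, 2) * (s * (s - 1)) ->
  2 ^ ((2 * s - 2) * L) <= Cc * (1024 * s ^ 2 * ((s + 1) * L) ^ 2).
Proof.
move=> hs hL H.
set E := 2 ^ ((2 * s - 2) * L); set F := 2 ^ (4 * L).
have Fpos : 0 < F by rewrite expn_gt0.
have hn : nn s L * nn s L = F * E.
  rewrite /nn /aa /F /E -!expnD; congr (2 ^ _).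
  by rewrite -!mulnDl; congr (_ * L); lia.
have hq : qq L * qq L = F * 16.
  rewrite /qq /F -!expnD (_ : 16 = 2 ^ 4) // -expnD; congr (2 ^ _); lia.
have n2 : 2 <= nn s L.
  rewrite /nn (_ : 2 = 2 ^ 1) // leq_exp2l // /aa.
  by rewrite muln_gt0 addn1 /=; lia.
have hk := bin2_2 (kk s L).-1.
have ek : (kk s L).-1 = 4 * qq L * (aa s L + 1) by rewrite /kk addn1.
have a1 : 1 <= aa s L by rewrite /aa muln_gt0 addn1 /=; lia.
move: hk H hq ek hn n2 a1; set k := kk s L; set q := qq L; set a := aa s L; set Ck := 'C(k.-1, 2).
set n := nn s L.
move=> hk H hq ek hn n2 a1.
have s1 : F * E <= 2 * (Cc * Ck * (s * (s - 1))).
  rewrite -hn; apply: leq_trans (_ : 2 * (n * (n - 1)) <= _); last by rewrite leq_mul2l.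
  rewrite mulnCA leq_mul2l; apply/orP; right; lia.
have s2 : 2 * (Cc * Ck * (s * (s - 1))) <= Cc * (k.-1 * k.-1) * (s * s).
  have -> : 2 * (Cc * Ck * (s * (s - 1))) = Cc * (Ck * 2) * (s * (s - 1)) by ring.
  apply: leq_mul; first by apply: leq_mul => //; rewrite hk; apply: leq_mul => //; lia.
  apply: leq_mul => //; lia.
have s3 : k.-1 * k.-1 = F * (256 * (a + 1) ^ 2).
  rewrite ek (_ : 4 * q * (a + 1) * (4 * q * (a + 1)) = 16 * (q * q) * ((a + 1) ^ 2)); last by ring.
  rewrite hq; ring.
have s4 : (a + 1) ^ 2 <= 4 * a ^ 2.
  rewrite (_ : 4 * a ^ 2 = (2 * a) ^ 2); last by rewrite expnMn.
  apply: expn_mono; lia.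
have : F * E <= F * (Cc * (1024 * s ^ 2 * a ^ 2)).
  apply: leq_trans s1 _; apply: leq_trans s2 _; rewrite s3.
  apply: leq_trans (_ : Cc * (F * (256 * (4 * a ^ 2))) * (s * s) <= _).
    apply: leq_mul => //; apply: leq_mul => //; apply: leq_mul => //; apply: leq_mul => //.
  rewrite (_ : F * (Cc * (1024 * s ^ 2 * a ^ 2)) = Cc * (F * (256 * (4 * a ^ 2))) * (s * s)) //.
  ring.
by rewrite leq_pmul2l.
Qed.

From Stdlib Require Import Reals Lra.

Lemma INR_expn x m : INR (expn x m) = (INR x ^ m)%R.
Proof.
elim: m => [|m IH]; first by rewrite expn0.
by rewrite expnS mulnE mult_INR IH.
Qed.

Lemma INR_muln a b : INR (muln a b) = (INR a * INR b)%R.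
Proof. by rewrite mulnE mult_INR. Qed.

Theorem mainTheorem10 :
  forall s : nat, (3 <= s)%N ->
  exists c : R, (0 < c)%R /\
    forall N : nat, exists n : nat, (N <= n)%N /\ (2 <= n)%N /\
      exists e : rel 'I_n,
        simple_graph e /\
        (forall S : {set 'I_n}, #|S| = s -> ~ is_stable e S) /\
        (forall C : {set {set 'I_n}}, is_clique_cover e C ->
           (c * Rpower (INR n) (2 - 4 / (INR s + 1)) / (log2 (INR n)) ^ 2
              <= INR #|C|)%R).
Proof.
move=> s hs.
have s0 : (0 < INR s)%R by apply: lt_0_INR; apply/ssrnat.ltP; rewrite (leq_trans _ hs).
exists (/ (1024 * INR s ^ 2))%R; split.
  apply: Rinv_0_lt_compat; apply: Rmult_lt_0_compat; [Lra.lra|apply: pow_lt; Lra.lra].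
move=> N.
set L := maxn N s.
have hL : (s <= L)%N by rewrite leq_maxr.
have hNL : (N <= L)%N by rewrite leq_maxl.
have a1 : (1 <= aa s L)%N.
  by rewrite /aa muln_gt0 addn1 /=; apply: leq_trans hL; apply: leq_trans hs.
exists (nn s L); split.
  apply: leq_trans hNL _; apply: ltnW; apply: leq_trans (ltn_expl _ (isT : 1 < 2)) _.
  rewrite /nn leq_exp2l //; rewrite /aa; apply: leq_pmull; by rewrite addn1.
split.
  by rewrite /nn (_ : 2 = expn 2 1) // leq_exp2l.
have [e [he1 [he2 he3]]] := graph_exists hs hL.
exists e; split => //; split => // C hC.
have H := final_nat hs hL (he3 C hC).
move/ssrnat.leP/le_INR: H.
rewrite INR_expn !INR_muln !INR_expn.
move=> H.
have e2 : INR 2 = 2%R by simpl; Lra.lra.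
have e1024 : INR 1024 = 1024%R by rewrite INR_IZR_INZ.
rewrite e2 in H *; rewrite e1024 in H.
have eS : INR (s + 1) = (INR s + 1)%R by rewrite addnE plus_INR.
rewrite eS in H.
have ea : INR (aa s L) = ((INR s + 1) * INR L)%R by rewrite /aa INR_muln eS.
set m := ((2 * s - 2) * L)%N in H.
have em : INR m = ((2 * INR s - 2) * INR L)%R.
  rewrite /m INR_muln subnE minus_INR; last first.
    by apply/ssrnat.leP; lia.
  by rewrite INR_muln e2.
have hR : Rpower (2 ^ aa s L) (2 - 4 / (INR s + 1)) = (2 ^ m)%R.
  rewrite -(Rpower_pow (aa s L)); last Lra.lra.
  rewrite Rpower_mult -Rpower_pow; last Lra.lra.
  f_equal; rewrite ea em; field; Lra.lra.
have hl : log2 (2 ^ aa s L) = INR (aa s L).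
  rewrite /log2 ln_pow; last Lra.lra.
  have : (0 < ln 2)%R by rewrite -ln_1; apply: ln_increasing; Lra.lra.
  move=> h; field; Lra.lra.
rewrite hR hl ea.
have L0 : (0 < INR L)%R by apply: lt_0_INR; apply/ssrnat.leP; lia.
set D := (1024 * (INR s * INR s) * ((INR s + 1) * INR L * ((INR s + 1) * INR L)))%R in H.
have Dpos : (0 < D)%R.
  rewrite /D; repeat apply: Rmult_lt_0_compat; Lra.lra.
apply: (Rmult_le_reg_r D) => //.
have -> : (/ (1024 * INR s ^ 2) * 2 ^ m / ((INR s + 1) * INR L) ^ 2 * D = 2 ^ m)%R.
  rewrite /D; field; split; Lra.lra.
exact: H.
Qed.
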